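(* Let $X'$ be a visual hyperbolic metric space with base point $o'$, and $X$ a geodesic hyperbolic metric space with base point $o$. Assume there is a map $f:\partial_\infty X'\to\partial_\infty X$ and a constant $c\ge0$ such that $|(f(\xi'_1)|f(\xi'_2))_o-(\xi'_1|\xi'_2)_{o'}|\le c$ for all $\xi'_1,\xi'_2\in\partial_\infty X'$. Then there exist a map $F:X'\to X$ and a constant $b\ge0$ such that $\big||F(x)F(y)|-|xy|\big|\le b$ for all $x,y\in X'$.
   Context: Gromov product: $(x|y)_z=\frac12(|zx|+|zy|-|xy|)$. A triple $(a_1,a_2,a_3)$ is a $\delta$-triple if $a_\mu\ge\min\{a_{\mu+1},a_{\mu+2}\}-\delta$ for $\mu=1,2,3$ (indices mod 3). $X$ is hyperbolic if for some $\delta\ge0$, $((x|y)_o,(y|z)_o,(x|z)_o)$ is a $\delta$-triple for all $o,x,y,z$. A sequence $(x_i)$ converges to infinity if $(x_i|x_j)_o\to\infty$; two such sequences are equivalent if $(x_i|x'_i)_o\to\infty$; $\partial_\infty X$ is the set of classes, and for $\xi,\xi'\in\partial_\infty X$, $(\xi|\xi')_o=\inf\liminf_i(x_i|x'_i)_o$ over representatives $(x_i)\in\xi$, $(x'_i)\in\xi'$; similarly $(x|\xi)_o$ for $x\in X$. A hyperbolic space $Y$ is visual if for some base point $o\in Y$ there is $D>0$ such that for every $y\in Y$ there is $\xi\in\partial_\infty Y$ with $|oy|\le(y|\xi)_o+D$. *)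

(* Defs.v *)
From HB Require Import structures.
From mathcomp Require Import all_boot all_order all_algebra.
From mathcomp Require Import all_classical all_reals all_analysis.
Unset Printing Implicit Defensive.
Import Order.TTheory GRing.Theory Num.Theory.
Local Open Scope classical_set_scope.
Local Open Scope ring_scope.

Section Gromov.
Context {R : realType} {X : Type}.

Definition is_metric (d : X -> X -> R) : Prop :=
  (forall x y, 0 <= d x y) /\ (forall x y, d x y = 0 <-> x = y) /\
  (forall x y, d x y = d y x) /\ (forall x y z, d x z <= d x y + d y z).

Definition gromov (d : X -> X -> R) (z x y : X) : R :=
  (d z x + d z y - d x y) / 2.

Definition delta_triple (a1 a2 a3 delta : R) : Prop :=
  Num.min a2 a3 - delta <= a1 /\ Num.min a3 a1 - delta <= a2 /\
  Num.min a1 a2 - delta <= a3.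

Definition hyperbolic (d : X -> X -> R) : Prop :=
  exists delta : R, 0 <= delta /\ forall o x y z : X,
    delta_triple (gromov d o x y) (gromov d o y z) (gromov d o x z) delta.

Definition geodesic (d : X -> X -> R) : Prop :=
  forall x y : X, exists g : R -> X, g 0 = x /\ g (d x y) = y /\
    forall s t, 0 <= s <= d x y -> 0 <= t <= d x y -> d (g s) (g t) = `|s - t|.

Definition conv_inf (d : X -> X -> R) (o : X) (u : nat -> X) : Prop :=
  forall M : R, exists N : nat, forall i j : nat, (N <= i)%N -> (N <= j)%N ->
    M <= gromov d o (u i) (u j).

Definition seq_equiv (d : X -> X -> R) (o : X) (u v : nat -> X) : Prop :=
  forall M : R, exists N : nat, forall i : nat, (N <= i)%N ->
    M <= gromov d o (u i) (v i).

Definition is_bdry_class (d : X -> X -> R) (o : X) (S : set (nat -> X)) : Prop :=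
  exists u, conv_inf d o u /\ S = [set v | conv_inf d o v /\ seq_equiv d o u v].

Definition bdry (d : X -> X -> R) (o : X) : Type :=
  {S : set (nat -> X) | is_bdry_class d o S}.

Definition gromov_bdry (d : X -> X -> R) (o : X) (xi xi' : bdry d o) : \bar R :=
  ereal_inf [set limn_einf (fun i => (gromov d o (u i) (v i))%:E) |
              u in proj1_sig xi & v in proj1_sig xi']%classic.

Definition gromov_pt_bdry (d : X -> X -> R) (o : X) (x : X) (xi : bdry d o) : \bar R :=
  ereal_inf [set limn_einf (fun i => (gromov d o x (u i))%:E) |
              u in proj1_sig xi]%classic.

Definition visual (d : X -> X -> R) (o : X) : Prop :=
  exists D : R, 0 < D /\ forall y : X, exists xi : bdry d o,
    ((d o y)%:E <= gromov_pt_bdry d o y xi + D%:E)%E.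

End Gromov.

(* Main.v *)
Require Import Defs.
From HB Require Import structures.
From mathcomp Require Import all_boot all_order all_algebra.
From mathcomp Require Import all_classical all_reals all_analysis.
From mathcomp Require Import lra.
Import Order.TTheory GRing.Theory Num.Theory.
Local Open Scope ring_scope.
Set Implicit Arguments.

Lemma einf_eq (R : realType) (u : (\bar R)^nat) :
  limn_einf u = ereal_sup (range (einfs u)).
Proof. rewrite limn_einf_lim; apply/cvg_lim => //; exact: cvg_einfs_sup. Qed.

Lemma einf_gt (R : realType) (x : nat -> R) (r : R) :
  (r%:E < limn_einf (fun i => (x i)%:E))%E -> exists N, forall n, (N <= n)%N -> r < x n.
Proof.
rewrite einf_eq => /ereal_sup_gt [_ [N _ <-]] h; exists N => n Nn.
rewrite -lte_fin; apply: (lt_le_trans h); apply: ereal_inf_lbound; by exists n.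
Qed.

Lemma einf_ge (R : realType) (x : nat -> R) (r : R) :
  (exists N, forall n, (N <= n)%N -> r <= x n) -> (r%:E <= limn_einf (fun i => (x i)%:E))%E.
Proof.
move=> [N hN]; rewrite einf_eq; apply: (@le_trans _ _ (einfs (fun i => (x i)%:E) N)).
  by apply: le_ereal_inf_tmp => _ [k /= Nk <-]; rewrite lee_fin; apply: hN.
by apply: ereal_sup_ubound; exists N.
Qed.
Local Open Scope ring_scope.

Lemma gsym (R : realType) (T : Type) (d : T -> T -> R) (hm : is_metric d) o x y :
  gromov d o x y = gromov d o y x.
Proof. case: hm => _ [_ [hs _]]; rewrite /gromov (hs x y); congr (_ / _); lra. Qed.

Lemma gle (R : realType) (T : Type) (d : T -> T -> R) (hm : is_metric d) o x y :
  gromov d o x y <= d o x.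
Proof.
case: hm => _ [_ [hs ht]]; rewrite /gromov ler_pdivrMr //.
have := ht o x y; have := hs o x; lra.
Qed.

Lemma gself (R : realType) (T : Type) (d : T -> T -> R) (hm : is_metric d) o x :
  gromov d o x x = d o x.
Proof. case: hm => _ [hz _]; rewrite /gromov (proj2 (hz x x)) //; lra. Qed.

Lemma hyp3 (R : realType) (T : Type) (d : T -> T -> R) (delta : R)
  (H : forall o x y z : T, delta_triple (gromov d o x y) (gromov d o y z) (gromov d o x z) delta)
  o x y z m : m <= gromov d o x y -> m <= gromov d o y z -> m - delta <= gromov d o x z.
Proof.
move=> h1 h2; have [_ [_ h3]] := H o x y z.
apply: le_trans h3; rewrite lerD2r; rewrite le_min h1 h2 //.
Qed.

Lemma vis_rep (R : realType) (T : Type) (d : T -> T -> R) o (y : T) (xi : bdry d o) (t D : R) u :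
  ((t%:E <= gromov_pt_bdry d o y xi + D%:E)%E) -> proj1_sig xi u ->
  exists N, forall n, (N <= n)%N -> t - D - 1 < gromov d o y (u n).
Proof.
move=> h hu; apply: einf_gt.
have h2 : (gromov_pt_bdry d o y xi <= limn_einf (fun i => (gromov d o y (u i))%:E))%E.
  by apply: ereal_inf_lbound; exists u.
have h3 : (t%:E <= limn_einf (fun i => (gromov d o y (u i))%:E) + D%:E)%E.
  apply: (le_trans h); exact: leeD2r.
rewrite -leeBlDr // in h3.
apply: lt_le_trans h3; rewrite EFinB lte_fin; lra.
Qed.

Lemma gen_mem (R : realType) (T : Type) (d : T -> T -> R) (hm : is_metric d) o S w :
  conv_inf d o w -> S = [set v | conv_inf d o v /\ seq_equiv d o w v]%classic -> S w.
Proof.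
move=> hw ->; split => // M; have [N hN] := hw M; exists N => i hi.
exact: hN.
Qed.
Arguments vis_rep {R T d o y xi t D u}.
Arguments hyp3 {R T d delta} H o x y z m.

Lemma Uprime (R : realType) (T : Type) (d : T -> T -> R) (hm : is_metric d) (delta : R)
  (hd : 0 <= delta)
  (H : forall o x y z : T, delta_triple (gromov d o x y) (gromov d o y z) (gromov d o x z) delta)
  o (x y : T) (xi1 xi2 : bdry d o) (D : R) (hD : 0 <= D)
  (hx : ((d o x)%:E <= gromov_pt_bdry d o x xi1 + D%:E)%E)
  (hy : ((d o y)%:E <= gromov_pt_bdry d o y xi2 + D%:E)%E) :
  ((gromov d o x y - D - 1 - 2 * delta)%:E <= gromov_bdry d o xi1 xi2)%E.
Proof.
apply: le_ereal_inf_tmp => _ [u hu [v hv <-]].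
apply: einf_ge.
have [N1 h1] := vis_rep hx hu.
have [N2 h2] := vis_rep hy hv.
exists (maxn N1 N2) => n hn.
have /h1 e1 : (N1 <= n)%N by apply: leq_trans hn; exact: leq_maxl.
have /h2 e2 : (N2 <= n)%N by apply: leq_trans hn; exact: leq_maxr.
have a1 := gle hm o x y.
have a2 : gromov d o x y <= d o y by rewrite gsym //; exact: gle.
have s1 := gsym hm o x (u n).
have k1 : gromov d o x y - D - 1 - delta <= gromov d o (u n) y.
  apply: (hyp3 H o (u n) x y); rewrite -?s1; lra.
have k2 : gromov d o x y - D - 1 - delta - delta <= gromov d o (u n) (v n).
  apply: (hyp3 H o (u n) y (v n)) => //; lra.
lra.
Qed.

Lemma Lprime (R : realType) (T : Type) (d : T -> T -> R) (hm : is_metric d) (delta : R)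
  (hd : 0 <= delta)
  (H : forall o x y z : T, delta_triple (gromov d o x y) (gromov d o y z) (gromov d o x z) delta)
  o (x y : T) (xi1 xi2 : bdry d o) (D : R) (hD : 0 <= D)
  (hx : ((d o x)%:E <= gromov_pt_bdry d o x xi1 + D%:E)%E)
  (hy : ((d o y)%:E <= gromov_pt_bdry d o y xi2 + D%:E)%E) (r m : R) :
  (r%:E < gromov_bdry d o xi1 xi2)%E -> m <= d o x -> m <= d o y -> m <= r ->
  m - D - 1 - 2 * delta <= gromov d o x y.
Proof.
move=> hr m1 m2 m3.
case: xi1 hx hr => S1 [u [hu1 hu2]] /= hx hr.
case: xi2 hy hr => S2 [v [hv1 hv2]] /= hy hr.
have mu := gen_mem hm hu1 hu2.
have mv := gen_mem hm hv1 hv2.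
have [N1 h1] := vis_rep hx mu.
have [N2 h2] := vis_rep hy mv.
have [N3 h3] : exists N, forall n, (N <= n)%N -> r < gromov d o (u n) (v n).
  apply: einf_gt; apply: (lt_le_trans hr); apply: ereal_inf_lbound.
  by exists u => //; exists v.
set n := maxn N1 (maxn N2 N3).
have /h1 e1 : (N1 <= n)%N by exact: leq_maxl.
have /h2 e2 : (N2 <= n)%N by rewrite /n (leq_trans _ (leq_maxr _ _)) // leq_maxl.
have /h3 e3 : (N3 <= n)%N by rewrite /n (leq_trans _ (leq_maxr _ _)) // leq_maxr.
have k1 : m - D - 1 - delta <= gromov d o x (v n).
  apply: (hyp3 H o x (u n) (v n)); lra.
have k2 : m - D - 1 - delta - delta <= gromov d o x y.
  apply: (hyp3 H o x (v n) y) => //; rewrite gsym //; lra.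
lra.
Qed.

Lemma pw (R : realType) (T : Type) (d : T -> T -> R) (delta : R)
  (H : forall o x y z : T, delta_triple (gromov d o x y) (gromov d o y z) (gromov d o x z) delta)
  o (w : nat -> T) N t p
  (hN : forall i j, (N <= i)%N -> (N <= j)%N -> t <= gromov d o (w i) (w j))
  (hp : gromov d o p (w N) = t) n : (N <= n)%N -> t - delta <= gromov d o p (w n).
Proof.
move=> hn; apply: (hyp3 H o p (w N) (w n)); first by rewrite hp.
exact: hN.
Qed.
Arguments pw {R T d delta} H {o w N t p} hN hp {n}.

Lemma Ux (R : realType) (T : Type) (d : T -> T -> R) (hm : is_metric d) (delta : R)
  (hd : 0 <= delta)
  (H : forall o x y z : T, delta_triple (gromov d o x y) (gromov d o y z) (gromov d o x z) delta)
  o (xi1 xi2 : bdry d o) w1 w2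
  (hS1 : proj1_sig xi1 = [set v | conv_inf d o v /\ seq_equiv d o w1 v]%classic)
  (hS2 : proj1_sig xi2 = [set v | conv_inf d o v /\ seq_equiv d o w2 v]%classic)
  N1 N2 t1 t2 p1 p2
  (hN1 : forall i j, (N1 <= i)%N -> (N1 <= j)%N -> t1 <= gromov d o (w1 i) (w1 j))
  (hN2 : forall i j, (N2 <= i)%N -> (N2 <= j)%N -> t2 <= gromov d o (w2 i) (w2 j))
  (hp1 : gromov d o p1 (w1 N1) = t1) (hp2 : gromov d o p2 (w2 N2) = t2)
  (hd1 : d o p1 = t1) (hd2 : d o p2 = t2) :
  ((gromov d o p1 p2 - 4 * delta)%:E <= gromov_bdry d o xi1 xi2)%E.
Proof.
apply: le_ereal_inf_tmp => _ [v1 hv1 [v2 hv2 <-]].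
apply: einf_ge.
rewrite hS1 in hv1; rewrite hS2 in hv2.
have [Na ha] := (proj2 hv1) t1.
have [Nb hb] := (proj2 hv2) t2.
exists (maxn (maxn N1 N2) (maxn Na Nb)) => n hn.
have n1 : (N1 <= n)%N by apply: leq_trans hn; rewrite !leq_max leqnn.
have n2 : (N2 <= n)%N by apply: leq_trans hn; rewrite !leq_max leqnn !orbT.
have na : (Na <= n)%N by apply: leq_trans hn; rewrite !leq_max leqnn !orbT.
have nb : (Nb <= n)%N by apply: leq_trans hn; rewrite !leq_max leqnn !orbT.
have e1 := pw H hN1 hp1 n1.
have e2 := pw H hN2 hp2 n2.
have f1 := ha n na. have f2 := hb n nb.
have g1 := gle hm o p1 p2.
have g2 : gromov d o p1 p2 <= d o p2 by rewrite gsym //; exact: gle.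
have k1 : t1 - delta - delta <= gromov d o p1 (v1 n).
  apply: (hyp3 H o p1 (w1 n) (v1 n)); lra.
have k2 : t2 - delta - delta <= gromov d o p2 (v2 n).
  apply: (hyp3 H o p2 (w2 n) (v2 n)); lra.
have k3 : gromov d o p1 p2 - 2 * delta - delta <= gromov d o (v1 n) p2.
  apply: (hyp3 H o (v1 n) p1 p2); rewrite ?(gsym hm o (v1 n)); lra.
have k4 : gromov d o p1 p2 - 3 * delta - delta <= gromov d o (v1 n) (v2 n).
  apply: (hyp3 H o (v1 n) p2 (v2 n)); lra.
lra.
Qed.

Lemma Lx (R : realType) (T : Type) (d : T -> T -> R) (hm : is_metric d) (delta : R)
  (hd : 0 <= delta)
  (H : forall o x y z : T, delta_triple (gromov d o x y) (gromov d o y z) (gromov d o x z) delta)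
  o (xi1 xi2 : bdry d o) w1 w2 (hw1 : conv_inf d o w1) (hw2 : conv_inf d o w2)
  (hS1 : proj1_sig xi1 = [set v | conv_inf d o v /\ seq_equiv d o w1 v]%classic)
  (hS2 : proj1_sig xi2 = [set v | conv_inf d o v /\ seq_equiv d o w2 v]%classic)
  N1 N2 t1 t2 p1 p2
  (hN1 : forall i j, (N1 <= i)%N -> (N1 <= j)%N -> t1 <= gromov d o (w1 i) (w1 j))
  (hN2 : forall i j, (N2 <= i)%N -> (N2 <= j)%N -> t2 <= gromov d o (w2 i) (w2 j))
  (hp1 : gromov d o p1 (w1 N1) = t1) (hp2 : gromov d o p2 (w2 N2) = t2) (r m : R) :
  (r%:E < gromov_bdry d o xi1 xi2)%E -> m <= t1 -> m <= t2 -> m <= r ->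
  m - 3 * delta <= gromov d o p1 p2.
Proof.
move=> hr m1 m2 m3.
have mu := gen_mem hm hw1 hS1.
have mv := gen_mem hm hw2 hS2.
have [N3 h3] : exists N, forall n, (N <= n)%N -> r < gromov d o (w1 n) (w2 n).
  apply: einf_gt; apply: (lt_le_trans hr); apply: ereal_inf_lbound.
  by exists w1 => //; exists w2.
set n := maxn N1 (maxn N2 N3).
have n1 : (N1 <= n)%N by rewrite /n !leq_max leqnn.
have n2 : (N2 <= n)%N by rewrite /n !leq_max leqnn !orbT.
have n3 : (N3 <= n)%N by rewrite /n !leq_max leqnn !orbT.
have e1 := pw H hN1 hp1 n1.
have e2 := pw H hN2 hp2 n2.
have e3 := h3 n n3.
have k1 : m - delta - delta <= gromov d o p1 (w2 n).
  apply: (hyp3 H o p1 (w1 n) (w2 n)); lra.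
have k2 : m - 2 * delta - delta <= gromov d o p1 p2.
  apply: (hyp3 H o p1 (w2 n) p2); rewrite ?(gsym hm o (w2 n)); lra.
lra.
Qed.

Unset Implicit Arguments.

Theorem theorem4p8 (R : realType) (X' X : Type)
  (d' : X' -> X' -> R) (d : X -> X -> R) (o' : X') (o : X)
  (hm' : is_metric d') (hm : is_metric d)
  (hhyp' : hyperbolic d') (hvis' : visual d' o')
  (hhyp : hyperbolic d) (hgeo : geodesic d)
  (f : bdry d' o' -> bdry d o) (c : R) (hc : 0 <= c)
  (hf : forall xi1 xi2 : bdry d' o',
     (gromov_bdry d o (f xi1) (f xi2) <= gromov_bdry d' o' xi1 xi2 + c%:E)%E /\
     (gromov_bdry d' o' xi1 xi2 <= gromov_bdry d o (f xi1) (f xi2) + c%:E)%E) :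
  exists (F : X' -> X) (b : R), 0 <= b /\
    forall x y : X', `| d (F x) (F y) - d' x y | <= b.
Proof.
move: hhyp' => [dl' [hdl' H']].
move: hhyp => [dl [hdl H]].
move: hvis' => [D [hD hvis]].
have hD0 : 0 <= D by apply: ltW.
have [xi' hxi'] := choice hvis.
have hb : forall xi : bdry d o, exists g, conv_inf d o g /\
    proj1_sig xi = [set v | conv_inf d o v /\ seq_equiv d o g v]%classic.
  by move=> xi; exact: proj2_sig xi.
have [gen hgen] := choice hb.
pose W := fun x => gen (f (xi' x)).
have [N hN] := @choice _ _ (fun x n => forall i j, (n <= i)%N -> (n <= j)%N ->
    d' o' x <= gromov d o (W x i) (W x j)) (fun x => (proj1 (hgen (f (xi' x)))) (d' o' x)).
have [G hG] := @choice _ _ (fun x (g : R -> X) => g 0 = o /\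
    g (d o (W x (N x))) = W x (N x) /\
    forall s t, 0 <= s <= d o (W x (N x)) -> 0 <= t <= d o (W x (N x)) ->
      d (g s) (g t) = `|s - t|) (fun x => hgeo o (W x (N x))).
pose P := fun x => G x (d' o' x).
have hm2 := hm; have hm2' := hm'.
case: hm2 => hpos [hzero [hsym htri]].
case: hm2' => hpos' _.
have facts : forall x, d o (P x) = d' o' x /\ gromov d o (P x) (W x (N x)) = d' o' x.
  move=> x; have [g0 [gL gi]] := hG x.
  have tL : d' o' x <= d o (W x (N x)).
    by have := hN x (N x) (N x) (leqnn _) (leqnn _); rewrite gself.
  have t0 := hpos' o' x.
  have L0 := hpos o (W x (N x)).
  have e1 : d o (P x) = d' o' x.
    have := gi 0 (d' o' x); rewrite g0 lexx L0 t0 tL /= => /(_ isT isT) ->.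
    by rewrite sub0r normrN ger0_norm.
  split => //.
  have e2 : d (P x) (W x (N x)) = d o (W x (N x)) - d' o' x.
    have := gi (d' o' x) (d o (W x (N x))); rewrite gL lexx L0 t0 tL /= => /(_ isT isT) ->.
    by rewrite ler0_norm ?subr_le0 // opprB.
  rewrite /gromov e1 e2; lra.
pose K := D + 2 + 2 * dl' + c + 4 * dl.
exists P, (2 * K); split; first by rewrite /K; lra.
move=> x y.
have [dx gx] := facts x.
have [dy gy] := facts y.
have [hcx hSx] := hgen (f (xi' x)).
have [hcy hSy] := hgen (f (xi' y)).
have [hf1 hf2] := hf (xi' x) (xi' y).
have U' := Uprime hm' hdl' H' _ _ _ _ _ hD0 (hxi' x) (hxi' y).
have UX := Ux hm hdl H _ _ hSx hSy _ _ _ _ (hN x) (hN y) gx gy dx dy.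
have a1 := gle hm' o' x y.
have a2 : gromov d' o' x y <= d' o' y by rewrite gsym //; exact: gle.
have g1 := gle hm o (P x) (P y).
have g2 : gromov d o (P x) (P y) <= d o (P y) by rewrite gsym //; exact: gle.
have ineq1 : gromov d' o' x y - D - 2 - 2 * dl' - c - 3 * dl <= gromov d o (P x) (P y).
  have := Lx hm hdl H _ _ hcx hcy hSx hSy _ _ _ _ (hN x) (hN y) gx gy
     (gromov d' o' x y - D - 2 - 2 * dl' - c) (gromov d' o' x y - D - 2 - 2 * dl' - c).
  move=> hL.
  have h1 := le_trans U' hf2.
  rewrite -leeBlDr // -EFinB in h1.
  have hr : ((gromov d' o' x y - D - 2 - 2 * dl' - c)%:E <
      gromov_bdry d o (f (xi' x)) (f (xi' y)))%E.
    apply: lt_le_trans h1; rewrite lte_fin; lra.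
  apply: (hL hr); lra.
have ineq2 : gromov d o (P x) (P y) - 4 * dl - c - 1 - D - 1 - 2 * dl' <= gromov d' o' x y.
  have := Lprime hm' hdl' H' _ _ _ _ _ hD0 (hxi' x) (hxi' y)
     (gromov d o (P x) (P y) - 4 * dl - c - 1) (gromov d o (P x) (P y) - 4 * dl - c - 1).
  move=> hL.
  have h1 := le_trans UX hf1.
  rewrite -leeBlDr // -EFinB in h1.
  have hr : ((gromov d o (P x) (P y) - 4 * dl - c - 1)%:E <
      gromov_bdry d' o' (xi' x) (xi' y))%E.
    apply: lt_le_trans h1; rewrite lte_fin; lra.
  apply: (hL hr); lra.
have ex : d (P x) (P y) = d o (P x) + d o (P y) - 2 * gromov d o (P x) (P y).
  rewrite /gromov; lra.
have ex' : d' x y = d' o' x + d' o' y - 2 * gromov d' o' x y.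
  rewrite /gromov; lra.
rewrite ex ex' dx dy ler_norml /K; apply/andP; split; lra.
Qed.
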